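(* Let $G=(V,E)$ be a temporal graph, $s\in V$, $t_s\in\mathbb{R}$, and $T$ the DFS tree produced by DFS-v2 on $G$ from $s$ with starting time $t_s$. Let $t_x\le t_y$ with $t_x\ge t_s$, let $v\neq s$, and let $O(v)$ be the set of occurrences of $v$ in $T$. Let $O'(v)=\{v_o\in O(v): t_{start}(v_o)\ge t_x,\ t_{end}(v_o)\le t_y\}$. If $O'(v)\neq\emptyset$ and $v_{\min}\in O'(v)$ minimizes $t_{end}(v_o)-t_{start}(v_o)$ over $O'(v)$, then the tree path from the root to $v_{\min}$ is a fastest path from $s$ to $v$ within $[t_x,t_y]$: it is a temporal path $P$ from $s$ to $v$ with $t_x\le t_{start}(P)$, $t_{end}(P)\le t_y$, and $t_{end}(P)-t_{start}(P)\le t_{end}(P')-t_{start}(P')$ for every temporal path $P'$ from $s$ to $v$ with $t_x\le t_{start}(P')$ and $t_{end}(P')\le t_y$. If $O'(v)=\emptyset$, then no temporal path $P'$ from $s$ to $v$ with $t_x\le t_{start}(P')$ and $t_{end}(P')\le t_y$ exists.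
   Context: A temporal graph is a pair $G=(V,E)$ where $V$ is a finite set of vertices and $E$ is a finite set of temporal edges, i.e. triples $(u,v,t)$ with $u,v\in V$, $u\neq v$, $t\in\mathbb{R}$ (the time at which the edge is active); distinct elements of $E$ are distinct triples. A temporal path from $x$ to $y$ is a sequence $P=\langle (w_1,w_2,t_1),\dots,(w_k,w_{k+1},t_k)\rangle$ of $k\ge1$ edges of $E$ with $w_1=x$, $w_{k+1}=y$ and $t_1\le t_2\le\dots\le t_k$; $t_{start}(P)=t_1$, $t_{end}(P)=t_k$. Temporal DFS-v2. The procedure maintains a value $\sigma(x)\in\mathbb{R}\cup\{\infty\}$ for every $x\in V$, initially $\infty$, and a set of already traversed edges, initially empty, and builds a rooted tree $T$ whose nodes are occurrences of vertices of $G$ (a vertex may occur several times). Each occurrence carries a label, namely the value assigned to $\sigma(x)$ when that occurrence was created. Start: create the root occurrence of $s$, set $\sigma(s)=t_s$, and make it current. Step (a): let $u$ be the vertex of the current occurrence, $\sigma_u$ its label, and $A$ the set of edges $(u,v,t)\in E$ not yet traversed with $\sigma_u\le t$. If $A=\emptyset$: if the current occurrence is the root, terminate; otherwise make its parent current and repeat step (a). If $A\neq\emptyset$, select an edge $e=(u,v,t)\in A$ with the largest time $t$ (ties arbitrary), mark it traversed and go to step (b). Step (b): if the current value $\sigma(v)>t$, create a new occurrence of $v$ as a child of the current occurrence joined by the tree edge $e$, set $\sigma(v):=t$ (its label), make it current and go to (a); otherwise go to (a) with the same current occurrence. Active interval: for a non-root occurrence $v_o$ of $T$, the tree edges on the path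 from the root to $v_o$ form a sequence $\langle (s=w_1,w_2,t_1),\dots,(w_k,w_{k+1}=v,t_k)\rangle$; set $t_{start}(v_o)=t_1$ and $t_{end}(v_o)=t_k$. *)

(* Defs.v *)
From Stdlib Require Import Reals List Relations.
Import ListNotations.
Open Scope R_scope.
Set Implicit Arguments.

Definition tedge (V : Type) : Type := (V * V * R)%type.
Definition esrc {V : Type} (e : tedge V) : V := fst (fst e).
Definition etgt {V : Type} (e : tedge V) : V := snd (fst e).
Definition etime {V : Type} (e : tedge V) : R := snd e.

Fixpoint is_tpath {V : Type} (E : list (tedge V)) (x y : V) (P : list (tedge V)) : Prop :=
  match P with
  | [] => False
  | [e] => In e E /\ esrc e = x /\ etgt e = y
  | e :: ((e' :: _) as P') =>
      In e E /\ esrc e = x /\ etime e <= etime e' /\ is_tpath E (etgt e) y P'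
  end.

Definition t_start {V : Type} (P : list (tedge V)) : R :=
  match P with [] => 0 | e :: _ => etime e end.

Fixpoint t_end {V : Type} (P : list (tedge V)) : R :=
  match P with
  | [] => 0
  | [e] => etime e
  | _ :: P' => t_end P'
  end.

(* Occurrences (nodes of the DFS tree T): vertex, label, and (for non-root
   occurrences) the parent index together with the joining tree edge. *)
Record occurrence (V : Type) := mkOcc {
  o_vtx : V;
  o_label : R;
  o_parent : option (nat * tedge V)
}.

(* State of DFS-v2.  sigma x = None encodes sigma(x) = infinity.
   Occurrences are stored in a list, indexed by creation order; the root is
   the occurrence with no parent (index 0). *)
Record dfs_state (V : Type) := mkState {
  st_sigma : V -> option R;
  st_trav : list (tedge V);
  st_nodes : list (occurrence V);
  st_cur : nat
}.

Definition sigma_gt (o : option R) (t : R) : Prop :=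
  match o with None => True | Some s => t < s end.

(* e belongs to the set A of step (a) for current vertex u with label lab *)
Definition available {V : Type} (E : list (tedge V)) (st : dfs_state V)
  (u : V) (lab : R) (e : tedge V) : Prop :=
  In e E /\ ~ In e (st_trav st) /\ esrc e = u /\ lab <= etime e.

(* One step of DFS-v2 (nondeterministic in the choice among ties). *)
Inductive dfs_step {V : Type} (E : list (tedge V)) : dfs_state V -> dfs_state V -> Prop :=
| step_new : forall st o e (sigma' : V -> option R),
    nth_error (st_nodes st) (st_cur st) = Some o ->
    available E st (o_vtx o) (o_label o) e ->
    (forall e', available E st (o_vtx o) (o_label o) e' -> etime e' <= etime e) ->
    sigma_gt (st_sigma st (etgt e)) (etime e) ->
    sigma' (etgt e) = Some (etime e) ->
    (forall x, x <> etgt e -> sigma' x = st_sigma st x) ->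
    dfs_step E st
      (mkState sigma' (e :: st_trav st)
         (st_nodes st ++ [mkOcc (etgt e) (etime e) (Some (st_cur st, e))])
         (length (st_nodes st)))
| step_skip : forall st o e,
    nth_error (st_nodes st) (st_cur st) = Some o ->
    available E st (o_vtx o) (o_label o) e ->
    (forall e', available E st (o_vtx o) (o_label o) e' -> etime e' <= etime e) ->
    ~ sigma_gt (st_sigma st (etgt e)) (etime e) ->
    dfs_step E st
      (mkState (st_sigma st) (e :: st_trav st) (st_nodes st) (st_cur st))
| step_back : forall st o p e,
    nth_error (st_nodes st) (st_cur st) = Some o ->
    (forall e', ~ available E st (o_vtx o) (o_label o) e') ->
    o_parent o = Some (p, e) ->
    dfs_step E st (mkState (st_sigma st) (st_trav st) (st_nodes st) p).

Definition dfs_init {V : Type} (s : V) (ts : R) (st : dfs_state V) : Prop :=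
  st_sigma st s = Some ts /\ (forall x, x <> s -> st_sigma st x = None) /\
  st_trav st = [] /\ st_nodes st = [mkOcc s ts None] /\ st_cur st = 0%nat.

Definition dfs_terminal {V : Type} (E : list (tedge V)) (st : dfs_state V) : Prop :=
  exists o, nth_error (st_nodes st) (st_cur st) = Some o /\ o_parent o = None /\
    (forall e', ~ available E st (o_vtx o) (o_label o) e').

Definition dfs_run {V : Type} (E : list (tedge V)) (s : V) (ts : R) (st : dfs_state V) : Prop :=
  exists st0, dfs_init s ts st0 /\ clos_refl_trans _ (dfs_step E) st0 st /\ dfs_terminal E st.

Inductive tree_path {V : Type} (nodes : list (occurrence V)) : nat -> list (tedge V) -> Prop :=
| tp_root : forall i o, nth_error nodes i = Some o -> o_parent o = None -> tree_path nodes i []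
| tp_child : forall i o p e P, nth_error nodes i = Some o -> o_parent o = Some (p, e) ->
    tree_path nodes p P -> tree_path nodes i (P ++ [e]).

Definition in_window {V : Type} (st : dfs_state V) (v : V) (tx ty : R) (i : nat)
  (P : list (tedge V)) : Prop :=
  (exists o, nth_error (st_nodes st) i = Some o /\ o_vtx o = v) /\
  tree_path (st_nodes st) i P /\ tx <= t_start P /\ t_end P <= ty.

(* Main.v *)
Require Import Defs.
From Stdlib Require Import Reals List Relations Lra Lia Classical.
Import ListNotations.
Open Scope R_scope.

Lemma nth_app_inv {A} (l : list A) a i o :
  nth_error (l ++ [a]) i = Some o -> nth_error l i = Some o \/ (i = length l /\ o = a).
Proof.
  intros H. destruct (Nat.lt_ge_cases i (length l)) as [Hl|Hl].
  - left. rewrite nth_error_app1 in H; auto.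
  - right. rewrite nth_error_app2 in H; auto.
    destruct (i - length l)%nat eqn:Hd; simpl in H.
    + inversion H; split; auto; lia.
    + destruct n; discriminate.
Qed.

Lemma nth_app_l {A} (l m : list A) i o :
  nth_error l i = Some o -> nth_error (l ++ m) i = Some o.
Proof.
  intros H. rewrite nth_error_app1; auto. apply nth_error_Some. congruence.
Qed.

Lemma nth_app_last {A} (l : list A) a : nth_error (l ++ [a]) (length l) = Some a.
Proof. rewrite nth_error_app2; auto. rewrite Nat.sub_diag. reflexivity. Qed.

Lemma tp_lift {V} (l m : list (occurrence V)) i P :
  tree_path l i P -> tree_path (l ++ m) i P.
Proof.
  induction 1.
  - eapply tp_root; eauto. apply nth_app_l; eauto.
  - eapply tp_child; eauto. apply nth_app_l; eauto.
Qed.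

Arguments tp_lift {V l} m {i P}.

Lemma tp_det {V} (l : list (occurrence V)) i P :
  tree_path l i P -> forall Q, tree_path l i Q -> P = Q.
Proof.
  induction 1; intros Q HQ; inversion HQ; subst.
  - reflexivity.
  - congruence.
  - congruence.
  - rewrite H in H2; inversion H2; subst. rewrite H0 in H3; inversion H3; subst.
    f_equal. apply IHtree_path; auto.
Qed.

Arguments tp_det {V l i P}.

Lemma tp_root_nil {V} (l : list (occurrence V)) i o P :
  nth_error l i = Some o -> o_parent o = None -> tree_path l i P -> P = [].
Proof.
  intros H1 H2 H3. inversion H3; subst; auto. congruence.
Qed.

Inductive anc {V} (l : list (occurrence V)) (a : nat) : nat -> Prop :=
| anc_refl : anc l a a
| anc_step : forall c o p e, nth_error l c = Some o -> o_parent o = Some (p, e) ->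
    anc l a p -> anc l a c.

Lemma anc_lift {V} (l m : list (occurrence V)) a c : anc l a c -> anc (l ++ m) a c.
Proof.
  induction 1. constructor. eapply anc_step; eauto. apply nth_app_l; eauto.
Qed.

Lemma t_start_app {V} (P Q : list (tedge V)) : P <> [] -> t_start (P ++ Q) = t_start P.
Proof. destruct P; simpl; congruence. Qed.

Lemma t_end_snoc {V} (P : list (tedge V)) e : t_end (P ++ [e]) = etime e.
Proof.
  induction P as [|a P IH]; simpl; auto.
  destruct P; simpl in *; auto.
Qed.

Lemma is_tpath_nonnil {V} (E : list (tedge V)) x y P : is_tpath E x y P -> P <> [].
Proof. destruct P; simpl; tauto || congruence. Qed.

Lemma is_tpath_snoc {V} (E : list (tedge V)) P : forall x y e,
  is_tpath E x y P -> In e E -> esrc e = y -> t_end P <= etime e ->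
  is_tpath E x (etgt e) (P ++ [e]).
Proof.
  induction P as [|a P IH]; intros x y e H1 H2 H3 H4; simpl in H1. contradiction.
  destruct P as [|b P].
  - destruct H1 as (? & ? & ?). simpl. subst. simpl in H4. repeat split; auto.
  - destruct H1 as (? & ? & ? & ?). change ((a :: b :: P) ++ [e]) with (a :: ((b :: P) ++ [e])).
    simpl ((b :: P) ++ [e]). simpl. repeat split; auto.
    change (b :: P ++ [e]) with ((b :: P) ++ [e]). eapply IH; eauto.
Qed.

Lemma is_tpath_se {V} (E : list (tedge V)) P : forall x y,
  is_tpath E x y P -> t_start P <= t_end P.
Proof.
  induction P as [|a P IH]; intros x y H; simpl in H. contradiction.
  destruct P as [|b P].
  - simpl. lra.
  - destruct H as (? & ? & ? & ?). specialize (IH _ _ H2). simpl in *. lra.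
Qed.
Section Inv.
Context {V : Type} (E : list (tedge V)) (s : V) (ts : R).

Definition root_occ : occurrence V := mkOcc s ts None.

Definition bnd (P : list (tedge V)) (t : R) := match P with [] => t | e :: _ => etime e end.

Definition good (nodes : list (occurrence V)) (y : V) (S t : R) : Prop :=
  y = s \/ exists j o P, nth_error nodes j = Some o /\ o_vtx o = y /\ o_label o <= t /\
     tree_path nodes j P /\ P <> [] /\ S <= t_start P.

Definition isdone (st : dfs_state V) (o : occurrence V) :=
  forall e, In e E -> esrc e = o_vtx o -> o_label o <= etime e -> In e (st_trav st).

Record Inv (st : dfs_state V) : Prop := {
  i_root : nth_error (st_nodes st) 0 = Some root_occ;
  i_cur : exists o, nth_error (st_nodes st) (st_cur st) = Some o;
  i_ni : forall i o, nth_error (st_nodes st) i = Some o ->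
     ts <= o_label o /\
     match o_parent o with
     | None => i = 0%nat
     | Some (p, e) => (p < i)%nat /\ In e E /\ etgt e = o_vtx o /\ etime e = o_label o /\ o_vtx o <> s /\
          exists op, nth_error (st_nodes st) p = Some op /\ esrc e = o_vtx op /\ o_label op <= etime e
     end;
  i_tp : forall i o, nth_error (st_nodes st) i = Some o -> exists P, tree_path (st_nodes st) i P;
  i_D : forall i o, nth_error (st_nodes st) i = Some o -> isdone st o \/ anc (st_nodes st) i (st_cur st);
  i_R : forall e, In e E -> ~ In e (st_trav st) -> esrc e = s -> ts <= etime e ->
     forall i P, tree_path (st_nodes st) i P -> P <> [] -> etime e <= t_start P;
  i_M : forall Pc, tree_path (st_nodes st) (st_cur st) Pc -> Pc <> [] ->
     forall i P, tree_path (st_nodes st) i P -> P <> [] -> t_start Pc <= t_start P;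
  i_S0 : st_sigma st s = Some ts;
  i_S : forall x r, st_sigma st x = Some r -> x <> s -> exists j o P, nth_error (st_nodes st) j = Some o /\
     o_vtx o = x /\ o_label o = r /\ tree_path (st_nodes st) j P /\ P <> [];
  i_J : forall e, In e (st_trav st) ->
     (exists k o, nth_error (st_nodes st) k = Some o /\ o_vtx o = esrc e /\ o_label o <= etime e) /\
     forall i o P, nth_error (st_nodes st) i = Some o -> o_vtx o = esrc e -> o_label o <= etime e ->
       tree_path (st_nodes st) i P -> good (st_nodes st) (etgt e) (bnd P (etime e)) (etime e)
}.
Arguments i_root {st}. Arguments i_cur {st}. Arguments i_ni {st}. Arguments i_tp {st}.
Arguments i_D {st}. Arguments i_R {st}. Arguments i_M {st}. Arguments i_S0 {st}.
Arguments i_S {st}. Arguments i_J {st}.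

Lemma t_start_snoc (P : list (tedge V)) e : t_start (P ++ [e]) = bnd P (etime e).
Proof. destruct P; reflexivity. Qed.

Lemma bnd_ne (P : list (tedge V)) t : P <> [] -> bnd P t = t_start P.
Proof. destruct P; simpl; congruence. Qed.

Lemma good_lift nodes m y S t : good nodes y S t -> good (nodes ++ m) y S t.
Proof.
  intros [H|(j & o & P & H1 & H2 & H3 & H4 & H5 & H6)]; [left; auto|right].
  exists j, o, P; repeat split; auto. apply nth_app_l; auto. apply tp_lift; auto.
Qed.

Lemma good_mono nodes y S S' t : S' <= S -> good nodes y S t -> good nodes y S' t.
Proof.
  intros Hs [H|(j & o & P & H1 & H2 & H3 & H4 & H5 & H6)]; [left; auto|right].
  exists j, o, P; repeat split; auto. lra.
Qed.

Lemma tpx {st} : Inv st -> forall {i P}, tree_path (st_nodes st) i P -> forall {o}, nth_error (st_nodes st) i = Some o ->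
  (P = [] /\ o = root_occ) \/
  (P <> [] /\ is_tpath E s (o_vtx o) P /\ t_end P = o_label o /\ o_vtx o <> s).
Proof.
  intros HI i P H. induction H as [i o Hn Hp | i o p e P Hn Hp HP IH]; intros o' Hn'.
  - rewrite Hn in Hn'; inversion Hn'; subst. left. split; auto.
    pose proof (i_ni HI _ _ Hn) as [_ Hm]. rewrite Hp in Hm. subst. rewrite (i_root HI) in Hn. congruence.
  - rewrite Hn in Hn'; inversion Hn'; subst o'. right.
    pose proof (i_ni HI _ _ Hn) as [_ Hm]. rewrite Hp in Hm.
    destruct Hm as (Hlt & HE & Ht & Hl & Hs & op & Hop & Hsrc & Hle).
    split. destruct P; simpl; congruence.
    rewrite t_end_snoc. split; [|split; auto].
    destruct (IH op Hop) as [[-> ->]|(Hne & Htp & Hte & _)].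
    + simpl. rewrite <- Ht. simpl in Hsrc. auto.
    + rewrite <- Ht. eapply is_tpath_snoc; eauto. lra.
Qed.

Lemma anc_start {nodes : list (occurrence V)} {a c} : anc nodes a c -> forall {Pa Pc}, tree_path nodes a Pa -> tree_path nodes c Pc ->
  Pa <> [] -> Pc <> [] /\ t_start Pc = t_start Pa.
Proof.
  induction 1 as [|c o p e Hn Hp Ha IH]; intros Pa Pc HA HC Hne.
  - rewrite (tp_det HC _ HA). auto.
  - inversion HC; subst.
    + congruence.
    + rewrite Hn in H; inversion H; subst. rewrite Hp in H0; inversion H0; subst.
      destruct (IH _ _ HA H1 Hne) as [Hn2 Hs]. split.
      * destruct P; simpl; congruence.
      * rewrite t_start_app; auto.
Qed.

Lemma anc_bnd {st} : Inv st -> forall i c Pi Pc oi oc t, anc (st_nodes st) i c ->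
  tree_path (st_nodes st) i Pi -> tree_path (st_nodes st) c Pc ->
  nth_error (st_nodes st) i = Some oi -> nth_error (st_nodes st) c = Some oc -> o_vtx oi = o_vtx oc ->
  bnd Pi t = bnd Pc t.
Proof.
  intros HI i c Pi Pc oi oc t Ha Hi Hc Hni Hnc Hv.
  destruct Pi as [|ei Pi'] eqn:EPi.
  - destruct (tpx HI Hi Hni) as [[_ ->]|(H&_)]; [|congruence].
    destruct (tpx HI Hc Hnc) as [[-> _]|(_&_&_&Hs)]; auto.
    simpl in Hv. congruence.
  - rewrite <- EPi in *. destruct (anc_start Ha Hi Hc) as [Hne Hs]. subst; discriminate.
    rewrite !bnd_ne; auto. subst; discriminate.
Qed.

Lemma undone_avail st o e : isdone st o -> In e E -> esrc e = o_vtx o -> o_label o <= etime e ->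
  ~ In e (st_trav st) -> False.
Proof. intros H1 H2 H3 H4 H5. apply H5, H1; auto. Qed.

Lemma notavail_done st o : (forall e', ~ available E st (o_vtx o) (o_label o) e') -> isdone st o.
Proof.
  intros H e H1 H2 H3. apply NNPP. intro Hn. apply (H e). unfold available. tauto.
Qed.

Lemma avail_bnd st o e Pc j Pj : Inv st -> nth_error (st_nodes st) (st_cur st) = Some o ->
  available E st (o_vtx o) (o_label o) e -> tree_path (st_nodes st) (st_cur st) Pc ->
  tree_path (st_nodes st) j Pj -> Pj <> [] -> bnd Pc (etime e) <= t_start Pj.
Proof.
  intros HI Ho (HE & Hnt & Hsrc & Hle) HPc HPj Hne.
  destruct (tpx HI HPc Ho) as [[-> ->]|(Hn & _)].
  - simpl. simpl in Hsrc, Hle. eapply (i_R HI); eauto.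
  - rewrite bnd_ne; auto. eapply (i_M HI); eauto.
Qed.

Hypothesis noloop : forall e, In e E -> esrc e <> etgt e.

Lemma tp_new_inv (st : dfs_state V) n c e i P :
  (forall i o, nth_error (st_nodes st) i = Some o -> exists P, tree_path (st_nodes st) i P) ->
  o_parent n = Some (c, e) -> (exists oc, nth_error (st_nodes st) c = Some oc) ->
  tree_path (st_nodes st ++ [n]) i P ->
  (i < length (st_nodes st) /\ tree_path (st_nodes st) i P)%nat \/
  (i = length (st_nodes st) /\ exists Pc, tree_path (st_nodes st) c Pc /\ P = Pc ++ [e]).
Proof.
  intros Htp Hpar [oc Hoc] H.
  assert (Hn : exists o, nth_error (st_nodes st ++ [n]) i = Some o) by (inversion H; eauto).
  destruct Hn as [o Hn]. destruct (nth_app_inv _ _ _ _ Hn) as [Ho|[Hi Ho]].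
  - left. split. apply nth_error_Some; congruence.
    destruct (Htp _ _ Ho) as [Q HQ]. rewrite (tp_det H _ (tp_lift _ HQ)). auto.
  - right. split; auto. subst.
    inversion H; subst.
    + rewrite nth_app_last in H0. inversion H0; subst. congruence.
    + rewrite nth_app_last in H0. inversion H0; subst. rewrite Hpar in H1. inversion H1; subst.
      destruct (Htp _ _ Hoc) as [Q HQ]. exists Q. split; auto.
      rewrite (tp_det H2 _ (tp_lift _ HQ)). auto.
Qed.

Lemma inv_new st o e sigma' :
  Inv st ->
  nth_error (st_nodes st) (st_cur st) = Some o ->
  available E st (o_vtx o) (o_label o) e ->
  (forall e', available E st (o_vtx o) (o_label o) e' -> etime e' <= etime e) ->
  sigma_gt (st_sigma st (etgt e)) (etime e) ->
  sigma' (etgt e) = Some (etime e) ->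
  (forall x, x <> etgt e -> sigma' x = st_sigma st x) ->
  Inv (mkState sigma' (e :: st_trav st)
         (st_nodes st ++ [mkOcc (etgt e) (etime e) (Some (st_cur st, e))])
         (length (st_nodes st))).
Proof.
  intros HI Ho Hav Hmax Hgt Hs1 Hs2.
  set (n := mkOcc (etgt e) (etime e) (Some (st_cur st, e))).
  assert (Hav' := Hav). destruct Hav' as (HE & Hnt & Hsrc & Hle).
  assert (Hlab := proj1 (i_ni HI _ _ Ho)).
  assert (Hys : etgt e <> s).
  { intro Heq. rewrite Heq, (i_S0 HI) in Hgt. simpl in Hgt. lra. }
  assert (Hc : exists oc, nth_error (st_nodes st) (st_cur st) = Some oc) by eauto.
  destruct (i_tp HI _ _ Ho) as [Pc HPc].
  assert (TPI : forall i P, tree_path ((st_nodes st) ++ [n]) i P ->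
     (i < length (st_nodes st) /\ tree_path (st_nodes st) i P)%nat \/ (i = length (st_nodes st) /\ P = Pc ++ [e])).
  { intros i P H. destruct (tp_new_inv st n (st_cur st) e i P (i_tp HI) (eq_refl _) Hc H) as [?|[? [Q [HQ ->]]]]; auto.
    right. split; auto. rewrite (tp_det HQ _ HPc). auto. }
  assert (HPn : tree_path ((st_nodes st) ++ [n]) (length (st_nodes st)) (Pc ++ [e])).
  { eapply tp_child. apply nth_app_last. reflexivity. apply tp_lift; auto. }
  assert (newM : forall i P, tree_path ((st_nodes st) ++ [n]) i P -> P <> [] -> bnd Pc (etime e) <= t_start P).
  { intros i P H Hne. destruct (TPI _ _ H) as [[_ H']|[_ ->]].
    - eapply avail_bnd; eauto.
    - rewrite t_start_snoc. lra. }
  assert (Hoc_old : forall i o', nth_error ((st_nodes st) ++ [n]) i = Some o' ->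
     nth_error (st_nodes st) i = Some o' \/ (i = length (st_nodes st) /\ o' = n)) by (intros; apply nth_app_inv; auto).
  constructor; cbn [st_nodes st_cur st_trav st_sigma].
  - apply nth_app_l. exact (i_root HI).
  - eexists; apply nth_app_last.
  - intros i o' H. destruct (Hoc_old _ _ H) as [H'|[-> ->]].
    + destruct (i_ni HI _ _ H') as [Hl Hm]. split; auto.
      destruct (o_parent o') as [[p e']|]; auto.
      destruct Hm as (? & ? & ? & ? & ? & op & Hop & ? & ?). repeat split; auto.
      exists op; repeat split; auto. apply nth_app_l; auto.
    + simpl. split. lra. repeat split; auto.
      * apply nth_error_Some; congruence.
      * exists o; repeat split; auto.  apply nth_app_l; auto.
  - intros i o' H. destruct (Hoc_old _ _ H) as [H'|[-> ->]].
    + destruct (i_tp HI _ _ H') as [Q HQ]. exists Q. apply tp_lift; auto.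
    + eauto.
  - intros i o' H. destruct (Hoc_old _ _ H) as [H'|[-> ->]].
    + destruct (i_D HI _ _ H') as [Hd|Ha].
      * left. intros e2 ? ? ?. right. apply Hd; auto.
      * right. eapply anc_step. apply nth_app_last. reflexivity. apply anc_lift; auto.
    + right. constructor.
  - intros e' HE' Hnt' Hs' Ht' i P H Hne. destruct (TPI _ _ H) as [[_ H']|[_ ->]].
    + apply (i_R HI e' HE') with i; auto. intro; apply Hnt'; right; auto.
    + rewrite t_start_snoc. destruct Pc as [|a Pc'] eqn:EPc.
      * simpl. destruct (tpx HI HPc Ho) as [[_ ->]|[Hx _]]; [|congruence].
        apply Hmax. repeat split; auto. intro; apply Hnt'; right; auto.
      * rewrite <- EPc in *. rewrite bnd_ne by (subst; discriminate).
        apply (i_R HI e' HE') with (st_cur st); auto. intro; apply Hnt'; right; auto. subst; discriminate.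
  - intros Pn H Hne i P HP HPne. destruct (TPI _ _ H) as [[Hlt _]|[_ ->]]. lia.
    rewrite t_start_snoc. apply newM with i; auto.
  - rewrite Hs2 by auto. exact (i_S0 HI).
  - intros x r Hx Hxs. destruct (classic (x = etgt e)) as [->|Hne].
    + rewrite Hs1 in Hx. inversion Hx; subst. exists (length (st_nodes st)), n, (Pc ++ [e]).
      repeat split; auto. apply nth_app_last. destruct Pc; discriminate.
    + rewrite Hs2 in Hx by auto. destruct (i_S HI _ _ Hx Hxs) as (j & o' & P & ? & ? & ? & ? & ?).
      exists j, o', P. repeat split; auto. apply nth_app_l; auto. apply tp_lift; auto.
  - intros e2 Hin. destruct Hin as [<-|Hin].
    + split. { exists (st_cur st), o. repeat split; auto. apply nth_app_l; auto. }
      intros i o' P H Hv Hl HP. destruct (Hoc_old _ _ H) as [H'|[-> ->]].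
      * destruct (TPI _ _ HP) as [[_ HP']|[Heq _]].
        2:{ exfalso. subst. assert (nth_error (st_nodes st) (length (st_nodes st)) = None)
              by (apply nth_error_None; lia). congruence. }
        destruct (i_D HI _ _ H') as [Hd|Ha].
        { exfalso. eapply undone_avail; eauto. }
        rewrite (anc_bnd HI _ _ _ _ _ _ (etime e) Ha HP' HPc H' Ho) by congruence.
        right. exists (length (st_nodes st)), n, (Pc ++ [e]).
        split; [apply nth_app_last|]. split; [reflexivity|]. split; [simpl; lra|].
        split; [exact HPn|]. split; [destruct Pc; discriminate|]. rewrite t_start_snoc; lra.
      * exfalso. simpl in Hv. apply (noloop e HE). auto.
    + destruct (i_J HI _ Hin) as [[k [ok (Hk1 & Hk2 & Hk3)]] Hall]. split.
      { exists k, ok. repeat split; auto. apply nth_app_l; auto. }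
      intros i o' P H Hv Hl HP. destruct (Hoc_old _ _ H) as [H'|[-> ->]].
      * destruct (TPI _ _ HP) as [[_ HP']|[Heq _]].
        2:{ exfalso. subst. assert (nth_error (st_nodes st) (length (st_nodes st)) = None)
              by (apply nth_error_None; lia). congruence. }
        apply good_lift. eapply Hall; eauto.
      * destruct (TPI _ _ HP) as [[Hlt _]|[_ ->]]. lia.
        destruct (i_tp HI _ _ Hk1) as [Pk HPk].
        apply good_lift. eapply good_mono; [|eapply (Hall k ok Pk); eauto].
        destruct (tpx HI HPk Hk1) as [[-> ->]|[Hkne _]].
        { exfalso. simpl in Hk2, Hv. apply Hys. congruence. }
        rewrite bnd_ne by (destruct Pc; discriminate). rewrite t_start_snoc.
        rewrite (bnd_ne Pk) by auto. apply newM with k; auto. apply tp_lift; auto.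
Qed.

Lemma inv_skip st o e :
  Inv st ->
  nth_error (st_nodes st) (st_cur st) = Some o ->
  available E st (o_vtx o) (o_label o) e ->
  ~ sigma_gt (st_sigma st (etgt e)) (etime e) ->
  Inv (mkState (st_sigma st) (e :: st_trav st) (st_nodes st) (st_cur st)).
Proof.
  intros HI Ho Hav Hng.
  assert (Hav' := Hav). destruct Hav' as (HE & Hnt & Hsrc & Hle).
  destruct (i_tp HI _ _ Ho) as [Pc HPc].
  constructor; cbn [st_nodes st_cur st_trav st_sigma].
  - exact (i_root HI).
  - exact (i_cur HI).
  - exact (i_ni HI).
  - exact (i_tp HI).
  - intros i o' H. destruct (i_D HI _ _ H) as [Hd|Ha]; auto.
    left. intros e2 ? ? ?. right. apply Hd; auto.
  - intros e' HE' Hnt'. apply (i_R HI e' HE'). intro; apply Hnt'; right; auto.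
  - exact (i_M HI).
  - exact (i_S0 HI).
  - exact (i_S HI).
  - intros e2 Hin. destruct Hin as [<-|Hin].
    + split. { exists (st_cur st), o. repeat split; auto. }
      intros i o' P H Hv Hl HP.
      destruct (i_D HI _ _ H) as [Hd|Ha].
      { exfalso. eapply undone_avail; eauto. }
      rewrite (anc_bnd HI _ _ _ _ _ _ (etime e) Ha HP HPc H Ho) by congruence.
      destruct (st_sigma st (etgt e)) as [r|] eqn:Hsig; [|simpl in Hng; tauto].
      simpl in Hng. destruct (classic (etgt e = s)) as [Hys|Hys]; [left; auto|].
      destruct (i_S HI _ _ Hsig Hys) as (j & oj & Pj & Hj1 & Hj2 & Hj3 & Hj4 & Hj5).
      right. exists j, oj, Pj. split; auto. split; auto. split; [lra|]. split; auto. split; auto.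
      eapply avail_bnd; eauto.
    + apply (i_J HI _ Hin).
Qed.

Lemma inv_back st o p e :
  Inv st ->
  nth_error (st_nodes st) (st_cur st) = Some o ->
  (forall e', ~ available E st (o_vtx o) (o_label o) e') ->
  o_parent o = Some (p, e) ->
  Inv (mkState (st_sigma st) (st_trav st) (st_nodes st) p).
Proof.
  intros HI Ho Hna Hp.
  destruct (i_ni HI _ _ Ho) as [_ Hm]. rewrite Hp in Hm.
  destruct Hm as (Hlt & HE & Ht & Hl & Hs & op & Hop & Hsrc & Hle).
  constructor; cbn [st_nodes st_cur st_trav st_sigma].
  - exact (i_root HI).
  - eauto.
  - exact (i_ni HI).
  - exact (i_tp HI).
  - intros i o' H. destruct (i_D HI _ _ H) as [Hd|Ha]; auto.
    inversion Ha; subst.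
    + left. rewrite Ho in H; inversion H; subst. apply notavail_done; auto.
    + rewrite Ho in H0; inversion H0; subst. rewrite Hp in H1; inversion H1; subst. auto.
  - exact (i_R HI).
  - intros Pp HPp Hne i P HP HPne.
    assert (HPc : tree_path (st_nodes st) (st_cur st) (Pp ++ [e])) by (eapply tp_child; eauto).
    rewrite <- (t_start_app Pp [e]) by auto. eapply (i_M HI); eauto. destruct Pp; discriminate.
  - exact (i_S0 HI).
  - exact (i_S HI).
  - exact (i_J HI).
Qed.

Lemma inv_init st : dfs_init s ts st -> Inv st.
Proof.
  intros (H1 & H2 & H3 & H4 & H5).
  assert (Hn : forall i o, nth_error (st_nodes st) i = Some o -> i = 0%nat /\ o = root_occ).
  { rewrite H4. intros [|i] o H; simpl in H. inversion H; auto. destruct i; discriminate. }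
  assert (Htp : forall i P, tree_path (st_nodes st) i P -> P = [] /\ i = 0%nat).
  { intros i P H. inversion H; subst; destruct (Hn _ _ H0) as [-> ->]; simpl in H1; auto; discriminate. }
  constructor.
  - rewrite H4; reflexivity.
  - rewrite H4, H5; eexists; reflexivity.
  - intros i o H. destruct (Hn _ _ H) as [-> ->]. simpl. split; auto; lra.
  - intros i o H. destruct (Hn _ _ H) as [-> ->]. exists []. eapply tp_root. rewrite H4; reflexivity. reflexivity.
  - intros i o H. destruct (Hn _ _ H) as [-> ->]. right. rewrite H5. constructor.
  - intros e _ _ _ _ i P HP Hne. destruct (Htp _ _ HP); contradiction.
  - intros Pc HP Hne. destruct (Htp _ _ HP); contradiction.
  - auto.
  - intros x r Hx Hxs. rewrite (H2 x Hxs) in Hx. discriminate.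
  - intros e Hin. rewrite H3 in Hin. destruct Hin.
Qed.

Lemma inv_steps st0 st : Inv st0 -> clos_refl_trans _ (dfs_step E) st0 st -> Inv st.
Proof.
  intros HI H. induction H as [x y Hs| x | x y z _ IH1 _ IH2]; auto.
  destruct Hs.
  - eapply inv_new; eauto.
  - eapply inv_skip; eauto.
  - eapply inv_back; eauto.
Qed.

Lemma terminal_done st : Inv st -> dfs_terminal E st ->
  forall i o, nth_error (st_nodes st) i = Some o -> isdone st o.
Proof.
  intros HI (oc & Hoc & Hp & Hna) i o H.
  destruct (i_D HI _ _ H) as [Hd|Ha]; auto.
  inversion Ha; subst.
  - rewrite Hoc in H; inversion H; subst. apply notavail_done; auto.
  - rewrite Hoc in H0; inversion H0; subst. congruence.
Qed.

Lemma claim st : Inv st -> (forall i o, nth_error (st_nodes st) i = Some o -> isdone st o) ->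
  forall Q x w, is_tpath E x w Q -> forall i o P, nth_error (st_nodes st) i = Some o -> o_vtx o = x ->
  o_label o <= t_start Q -> tree_path (st_nodes st) i P ->
  good (st_nodes st) w (bnd P (t_start Q)) (t_end Q).
Proof.
  intros HI Hall Q. induction Q as [|e Q IH]; intros x w HQ i o P Hn Hv Hl HP; simpl in HQ. contradiction.
  assert (Hlab := proj1 (i_ni HI _ _ Hn)).
  destruct Q as [|e' Q].
  - destruct HQ as (HE & Hs & Ht). simpl in *.
    assert (Hin : In e (st_trav st)) by (apply (Hall _ _ Hn); auto; congruence).
    rewrite <- Ht. apply (proj2 (i_J HI e Hin)) with i o; auto. congruence.
  - destruct HQ as (HE & Hs & Hle & HQ'). simpl t_start in *.
    assert (Hin : In e (st_trav st)) by (apply (Hall _ _ Hn); auto; congruence).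
    assert (Hg := proj2 (i_J HI e Hin) i o P Hn ltac:(congruence) Hl HP).
    assert (HbP : bnd P (etime e) <= etime e).
    { destruct (tpx HI HP Hn) as [[-> _]|(Hne & Htp & Hte & _)]. simpl; lra.
      rewrite bnd_ne by auto. pose proof (is_tpath_se _ _ _ _ Htp). lra. }
    change (t_end (e :: e' :: Q)) with (t_end (e' :: Q)).
    destruct Hg as [Hys|(j & oj & Pj & Hj1 & Hj2 & Hj3 & Hj4 & Hj5 & Hj6)].
    + assert (Hr := IH _ _ HQ' 0%nat root_occ [] (i_root HI) ltac:(simpl; auto)).
      simpl in Hr. assert (ts <= etime e') by lra. specialize (Hr H).
      assert (Htr : tree_path (st_nodes st) 0 []) by (eapply tp_root; [exact (i_root HI)|reflexivity]).
      specialize (Hr Htr). eapply good_mono; [|exact Hr]. lra.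
    + assert (Hr := IH _ _ HQ' j oj Pj Hj1 Hj2 ltac:(simpl; lra) Hj4).
      rewrite bnd_ne in Hr by auto. eapply good_mono; [|exact Hr]. lra.
Qed.

Lemma main_inner (tx ty : R) (v : V) (st : dfs_state V) :
  dfs_run E s ts st ->
  tx <= ty -> ts <= tx -> v <> s ->
  (forall i P, in_window st v tx ty i P ->
     (forall j Q, in_window st v tx ty j Q -> t_end P - t_start P <= t_end Q - t_start Q) ->
     is_tpath E s v P /\ tx <= t_start P /\ t_end P <= ty /\
     (forall P', is_tpath E s v P' -> tx <= t_start P' -> t_end P' <= ty ->
        t_end P - t_start P <= t_end P' - t_start P'))
  /\
  ((forall i P, ~ in_window st v tx ty i P) ->
     forall P', is_tpath E s v P' -> tx <= t_start P' -> t_end P' <= ty -> False).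
Proof.
  intros (st0 & Hinit & Hrt & Hterm) Hxy Hsx Hvs.
  assert (HI : Inv st) by (eapply inv_steps; eauto; apply inv_init; auto).
  assert (Hdone := terminal_done st HI Hterm).
  assert (KEY : forall P', is_tpath E s v P' -> tx <= t_start P' -> t_end P' <= ty ->
     exists j Pj, in_window st v tx ty j Pj /\ t_end Pj - t_start Pj <= t_end P' - t_start P').
  { intros P' HP' H1 H2.
    assert (Htr : tree_path (st_nodes st) 0 []) by (eapply tp_root; [exact (i_root HI)|reflexivity]).
    assert (Hst : ts <= t_start P') by lra.
    destruct (claim st HI Hdone P' s v HP' 0%nat root_occ [] (i_root HI) eq_refl Hst Htr)
      as [Hv|(j & oj & Pj & Hj1 & Hj2 & Hj3 & Hj4 & Hj5 & Hj6)]; [contradiction|].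
    simpl in Hj6.
    destruct (tpx HI Hj4 Hj1) as [[? _]|(_ & Htp & Hte & _)]; [contradiction|].
    exists j, Pj. split.
    - split; [eauto|]. split; auto. split; lra.
    - lra. }
  split.
  - intros i P Hw Hmin.
    destruct Hw as ((o & Ho & Hov) & HP & H1 & H2).
    destruct (tpx HI HP Ho) as [[_ ->]|(Hne & Htp & Hte & _)].
    + simpl in Hov. congruence.
    + rewrite Hov in Htp. split; auto. split; auto. split; auto.
      intros P' HP' H3 H4. destruct (KEY P' HP' H3 H4) as (j & Pj & Hjw & Hjd).
      specialize (Hmin j Pj Hjw). lra.
  - intros Hno P' HP' H3 H4. destruct (KEY P' HP' H3 H4) as (j & Pj & Hjw & _).
    exact (Hno j Pj Hjw).
Qed.

End Inv.

Theorem mainTheorem9 (V : Type) (E : list (tedge V)) (s : V) (ts tx ty : R) (v : V)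
  (st : dfs_state V) :
  NoDup E ->
  (forall e, In e E -> esrc e <> etgt e) ->
  dfs_run E s ts st ->
  tx <= ty -> ts <= tx -> v <> s ->
  (forall i P, in_window st v tx ty i P ->
     (forall j Q, in_window st v tx ty j Q -> t_end P - t_start P <= t_end Q - t_start Q) ->
     is_tpath E s v P /\ tx <= t_start P /\ t_end P <= ty /\
     (forall P', is_tpath E s v P' -> tx <= t_start P' -> t_end P' <= ty ->
        t_end P - t_start P <= t_end P' - t_start P'))
  /\
  ((forall i P, ~ in_window st v tx ty i P) ->
     forall P', is_tpath E s v P' -> tx <= t_start P' -> t_end P' <= ty -> False).
Proof.
  intros _ Hnl Hrun Hxy Hsx Hvs. exact (main_inner E s ts Hnl tx ty v st Hrun Hxy Hsx Hvs).
Qed.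

Print Assumptions mainTheorem9.
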